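(* Let $n\ge1$, let $u(z)$ be a scalar function and $\mathbf v(z)\in\mathbb R^n$ a vector function (column vector), let $A$ be a constant real skew-symmetric $n\times n$ matrix and $\beta$ a constant. Define the block matrices of block size $(1,1,n,1)\times(1,1,n,1)$ \[ {\cal B}_0=\begin{pmatrix} -1 & 0 & 0 & 0\\ 0 & 0 & 0 & 0\\ 0 & 0 & 0 & 0\\ 0 & 0 & 0 & 1 \end{pmatrix},\quad {\cal B}_1=\begin{pmatrix} 0 & 1 & 0 & 0\\ u & 0 & 0 & 1\\ \mathbf v & 0 & 0 & 0\\ 0 & u & \mathbf v^T & 0 \end{pmatrix},\quad {\cal B}_2= \begin{pmatrix} u & 0 & 0 & 0\\ u' & 0 & \mathbf v^T & 0\\ \mathbf v' & -\mathbf v & 0 & 0\\ 0 & u' & (\mathbf v')^T & -u \end{pmatrix}, \] and ${\cal B}=\zeta{\cal B}_0+{\cal B}_1$, where $\zeta$ is a spectral parameter. Then: (a) The system $u''=\frac32u^2-\frac32(\mathbf v,\mathbf v)+\beta$, $\mathbf v'''=3u\mathbf v'+3u'\mathbf v+A\mathbf v$ admits the isospectral Lax pair ${\cal A}'=[{\cal B},{\cal A}]$ with ${\cal A}=\zeta^3{\cal B}_0+\zeta^2{\cal B}_1+\zeta{\cal B}_2+{\cal B}_3$, where \[ {\cal B}_3= \begin{pmatrix} u' & -u & \mathbf v^T & 0\\ \frac{1}{2}u^2-\frac{1}{2}(\mathbf v,\mathbf v)+\beta & 0 & (\mathbf v')^T & -u\\ \mathbf v''-2u\mathbf v & -\mathbf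 v' & -A & \mathbf v\\ 0 & \frac{1}{2}u^2-\frac{1}{2}(\mathbf v,\mathbf v)+\beta & (\mathbf v'')^T-2u\mathbf v^T & -u' \end{pmatrix}. \] (b) The system $u''=\frac32u^2-\frac32(\mathbf v,\mathbf v)+z$, $\mathbf v'''=3u\mathbf v'+3u'\mathbf v+A\mathbf v$ admits the isomonodromic Lax pair ${\cal A}'={\cal B}_\zeta+[{\cal B},{\cal A}]$ with ${\cal A}=\zeta^4{\cal B}_0+\zeta^3{\cal B}_1+\zeta^2{\cal B}_2+\zeta{\cal B}_3+{\cal B}_4$, where \[ {\cal B}_3= \begin{pmatrix} u' & -u & \mathbf v^T & 0\\ \frac{1}{2}u^2-\frac{1}{2}(\mathbf v,\mathbf v)+z & 0 & (\mathbf v')^T & -u\\ \mathbf v''-2u\mathbf v & -\mathbf v' & -A & \mathbf v\\ 0 & \frac{1}{2}u^2-\frac{1}{2}(\mathbf v,\mathbf v)+z & (\mathbf v'')^T-2u\mathbf v^T & -u' \end{pmatrix},\quad {\cal B}_4=\begin{pmatrix} 0 & 0 & 0 & 0\\ 1 & 0 & 0 & 0\\ 0 & 0 & 0 & 0\\ 0 & 1 & 0 & 0 \end{pmatrix}. \] (c) The system $u'''=3uu'-3(\mathbf v,\mathbf v')+zu'+2u$, $\mathbf v'''=3u\mathbf v'+3u'\mathbf v+z\mathbf v'+(A+2)\mathbf v$ admits the isomonodromic Lax pair ${\cal A}'={\cal B}_\zeta+[{\cal B},{\cal A}]$ with ${\cal A}=-(\zeta-z\zeta^{-1}){\cal B}-{\cal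 B}_2-\zeta^{-1}{\cal B}_3$, where \[ {\cal B}_3= \begin{pmatrix} u'+1 & -u & \mathbf v^T & 0\\ u''-u^2+(\mathbf v,\mathbf v) & 0 & (\mathbf v')^T & -u\\ \mathbf v''-2u\mathbf v & -\mathbf v' & -A & \mathbf v\\ 0 & u''-u^2+(\mathbf v,\mathbf v) & (\mathbf v'')^T-2u\mathbf v^T & -u'-1 \end{pmatrix}. \]
   Context: Primes denote derivatives with respect to $z$; $\zeta$ is independent of $z$; $(\cdot,\cdot)$ is the standard scalar product on $\mathbb R^n$; in (c), $A+2$ means $A+2I_n$. ''Admits the Lax pair'' means the stated matrix equation holds by virtue of the system. *)

(* Defs.v *)
From HB Require Import structures.
From mathcomp Require Import all_boot all_order all_algebra.
From mathcomp Require Import all_classical all_reals all_analysis.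
Set Implicit Arguments. Unset Strict Implicit. Unset Printing Implicit Defensive.
Import Order.TTheory GRing.Theory Num.Theory.
Import numFieldNormedType.Exports.
Local Open Scope ring_scope.

Section LaxDefs.
Variables (R : realType) (n : nat).

Definition mxder (p q : nat) (F : R -> 'M[R]_(p, q)) (x : R) : 'M[R]_(p, q) :=
  \matrix_(i, j) derive1 (fun t => F t i j) x.

Definition mxderivable (p q : nat) (F : R -> 'M[R]_(p, q)) : Prop :=
  forall i j x, derivable (fun t => F t i j) x 1.

Definition dotv (x y : 'cV[R]_n) : R := (x^T *m y) 0 0.

Definition blk4
  (a11 a12 : 'M[R]_1) (a13 : 'M[R]_(1, n)) (a14 : 'M[R]_1)
  (a21 a22 : 'M[R]_1) (a23 : 'M[R]_(1, n)) (a24 : 'M[R]_1)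
  (a31 a32 : 'M[R]_(n, 1)) (a33 : 'M[R]_n) (a34 : 'M[R]_(n, 1))
  (a41 a42 : 'M[R]_1) (a43 : 'M[R]_(1, n)) (a44 : 'M[R]_1)
  : 'M[R]_((1 + 1) + (n + 1)) :=
  block_mx (block_mx a11 a12 a21 a22) (block_mx a13 a14 a23 a24)
           (block_mx a31 a32 a41 a42) (block_mx a33 a34 a43 a44).

Definition LB0 : 'M[R]_((1 + 1) + (n + 1)) :=
  blk4 (-1)%:M 0 0 0
       0 0 0 0
       0 0 0 0
       0 0 0 1%:M.

Definition LB1 (u : R) (v : 'cV[R]_n) : 'M[R]_((1 + 1) + (n + 1)) :=
  blk4 0 1%:M 0 0
       u%:M 0 0 1%:M
       v 0 0 0
       0 u%:M v^T 0.

Definition LB2 (u u1 : R) (v v1 : 'cV[R]_n) : 'M[R]_((1 + 1) + (n + 1)) :=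
  blk4 u%:M 0 0 0
       u1%:M 0 v^T 0
       v1 (- v) 0 0
       0 u1%:M v1^T (- u)%:M.

(* Generic shape of B3: e is added to the (1,1) entry and subtracted from the
   (4,4) entry, w is the common (2,1)/(4,2) entry. *)
Definition LB3gen (A : 'M[R]_n) (e w u u1 : R) (v v1 v2 : 'cV[R]_n)
  : 'M[R]_((1 + 1) + (n + 1)) :=
  blk4 (u1 + e)%:M (- u)%:M v^T 0
       w%:M 0 v1^T (- u)%:M
       (v2 - u *+ 2 *: v) (- v1) (- A) v
       0 w%:M (v2^T - u *+ 2 *: v^T) (- u1 - e)%:M.

(* B3 of parts (a) (c := beta) and (b) (c := z) *)
Definition LB3ab (A : 'M[R]_n) (c u u1 : R) (v v1 v2 : 'cV[R]_n) :=
  LB3gen A 0 (u ^+ 2 / 2 - dotv v v / 2 + c) u u1 v v1 v2.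

Definition LB3c (A : 'M[R]_n) (u u1 u2 : R) (v v1 v2 : 'cV[R]_n) :=
  LB3gen A 1 (u2 - u ^+ 2 + dotv v v) u u1 v v1 v2.

Definition LB4 : 'M[R]_((1 + 1) + (n + 1)) :=
  blk4 0 0 0 0
       1%:M 0 0 0
       0 0 0 0
       0 1%:M 0 0.

Definition LB (zeta u : R) (v : 'cV[R]_n) := zeta *: LB0 + LB1 u v.

Definition mxcomm (m : nat) (X Y : 'M[R]_m) := X *m Y - Y *m X.

End LaxDefs.

(* Main.v *)
Require Import Defs.
From HB Require Import structures.
From mathcomp Require Import all_boot all_order all_algebra.
From mathcomp Require Import all_classical all_reals all_analysis.
From mathcomp Require Import ring.
Import Order.TTheory GRing.Theory Num.Theory.
Import numFieldNormedType.Exports.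
Local Open Scope ring_scope.

Set Implicit Arguments. Unset Strict Implicit. Unset Printing Implicit Defensive.


Section Infra.
Variable R : realType.
Implicit Types (x z : R) (df dg : R).

Lemma dext (f g : R -> R) x df : (forall t, f t = g t) ->
  is_derive x (1:R) g df -> is_derive x (1:R) f df.
Proof. by move=> /funext ->. Qed.

Lemma dval (f : R -> R) x df df' : is_derive x (1:R) f df -> df = df' -> is_derive x (1:R) f df'.
Proof. by move=> ? <-. Qed.

Lemma dcst (c : R) x : is_derive x (1:R) (fun _ : R => c) 0.
Proof. exact: is_derive_cst. Qed.

Lemma did x : is_derive x (1:R) (fun t : R => t) 1.
Proof. exact: is_derive_id. Qed.

Lemma dadd (f g : R -> R) x df dg : is_derive x (1:R) f df -> is_derive x (1:R) g dg ->
  is_derive x (1:R) (fun t => f t + g t) (df + dg).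
Proof. move=> H1 H2; exact: (is_deriveD H1 H2). Qed.

Lemma dopp (f : R -> R) x df : is_derive x (1:R) f df ->
  is_derive x (1:R) (fun t => - f t) (- df).
Proof. move=> H1; exact: (is_deriveN H1). Qed.

Lemma dsub (f g : R -> R) x df dg : is_derive x (1:R) f df -> is_derive x (1:R) g dg ->
  is_derive x (1:R) (fun t => f t - g t) (df - dg).
Proof. move=> H1 H2; exact: (is_deriveB H1 H2). Qed.

Lemma dmul (f g : R -> R) x df dg : is_derive x (1:R) f df -> is_derive x (1:R) g dg ->
  is_derive x (1:R) (fun t => f t * g t) (f x * dg + g x * df).
Proof. move=> H1 H2; exact: (is_deriveM H1 H2). Qed.

Lemma dsum m (f : 'I_m -> R -> R) x (df : 'I_m -> R) :
  (forall k, is_derive x (1:R) (f k) (df k)) ->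
  is_derive x (1:R) (fun t => \sum_(k < m) f k t) (\sum_(k < m) df k).
Proof.
elim: m f df => [|m IH] f df H.
  apply: (@dext _ (fun _ => 0)) => [t|]; first by rewrite big_ord0.
  by rewrite big_ord0; exact: dcst.
apply: (@dext _ (fun t => \sum_(k < m) f (widen_ord (leqnSn m) k) t + f ord_max t)).
  by move=> t; rewrite big_ord_recr.
rewrite big_ord_recr; apply: dadd => //.
exact: (IH (fun k => f (widen_ord (leqnSn m) k)) (fun k => df (widen_ord (leqnSn m) k))).
Qed.

Definition MD p q (F : R -> 'M[R]_(p, q)) z (M : 'M[R]_(p, q)) :=
  forall i j, is_derive z (1:R) (fun t => F t i j) (M i j).

Lemma MD_mxder p q (F : R -> 'M[R]_(p, q)) z M : MD F z M -> mxder F z = M.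
Proof.
move=> H; apply/matrixP => i j; rewrite mxE derive1E.
have Hij := H i j; exact: derive_val.
Qed.

Lemma MD_of p q (F : R -> 'M[R]_(p, q)) z : mxderivable F -> MD F z (mxder F z).
Proof.
move=> H i j; rewrite mxE derive1E; exact: derivableP.
Qed.

Lemma MD_eq p q (F : R -> 'M[R]_(p, q)) z M M' : MD F z M -> M = M' -> MD F z M'.
Proof. by move=> ? <-. Qed.

Lemma MD_cst p q (C : 'M[R]_(p, q)) z : MD (fun _ => C) z 0.
Proof. move=> i j; rewrite mxE; exact: dcst. Qed.

Lemma MD_add p q (F G : R -> 'M[R]_(p, q)) z M N : MD F z M -> MD G z N ->
  MD (fun t => F t + G t) z (M + N).
Proof.
move=> H1 H2 i j; rewrite mxE; apply: (@dext _ (fun t => F t i j + G t i j)).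
  by move=> t; rewrite mxE.
exact: dadd.
Qed.

Lemma MD_opp p q (F : R -> 'M[R]_(p, q)) z M : MD F z M ->
  MD (fun t => - F t) z (- M).
Proof.
move=> H1 i j; rewrite mxE; apply: (@dext _ (fun t => - F t i j)).
  by move=> t; rewrite mxE.
exact: dopp.
Qed.

Lemma MD_sub p q (F G : R -> 'M[R]_(p, q)) z M N : MD F z M -> MD G z N ->
  MD (fun t => F t - G t) z (M - N).
Proof. by move=> H1 H2; apply: MD_add => //; exact: MD_opp. Qed.

Lemma MD_scale p q (f : R -> R) (F : R -> 'M[R]_(p, q)) z df M :
  is_derive z (1:R) f df -> MD F z M ->
  MD (fun t => f t *: F t) z (f z *: M + df *: F z).
Proof.
move=> H1 H2 i j; rewrite !mxE; apply: (@dext _ (fun t => f t * F t i j)).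
  by move=> t; rewrite mxE.
apply: dval; first exact: dmul.
by rewrite [F z i j * _]mulrC.
Qed.

Lemma MD_scalar p (f : R -> R) z df : is_derive z (1:R) f df ->
  MD (fun t => (f t)%:M : 'M[R]_p) z (df%:M).
Proof.
move=> H i j; rewrite mxE; apply: (@dext _ (fun t => f t *+ (i == j))).
  by move=> t; rewrite mxE.
case: (i == j); rewrite ?mulr1n ?mulr0n //; exact: dcst.
Qed.

Lemma MD_tr p q (F : R -> 'M[R]_(p, q)) z M : MD F z M ->
  MD (fun t => (F t)^T) z M^T.
Proof.
move=> H i j; rewrite mxE; apply: (@dext _ (fun t => F t j i)).
  by move=> t; rewrite mxE.
exact: H.
Qed.

Lemma MD_row p q1 q2 (F : R -> 'M[R]_(p, q1)) (G : R -> 'M[R]_(p, q2)) z M N :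
  MD F z M -> MD G z N -> MD (fun t => row_mx (F t) (G t)) z (row_mx M N).
Proof.
move=> H1 H2 i j; case: (split_ordP j) => k ->.
  rewrite row_mxEl; apply: (@dext _ (fun t => F t i k)) => [t|]; last exact: H1.
  by rewrite row_mxEl.
rewrite row_mxEr; apply: (@dext _ (fun t => G t i k)) => [t|]; last exact: H2.
by rewrite row_mxEr.
Qed.

Lemma MD_col p1 p2 q (F : R -> 'M[R]_(p1, q)) (G : R -> 'M[R]_(p2, q)) z M N :
  MD F z M -> MD G z N -> MD (fun t => col_mx (F t) (G t)) z (col_mx M N).
Proof.
move=> H1 H2 i j; case: (split_ordP i) => k ->.
  rewrite col_mxEu; apply: (@dext _ (fun t => F t k j)) => [t|]; last exact: H1.
  by rewrite col_mxEu.
rewrite col_mxEd; apply: (@dext _ (fun t => G t k j)) => [t|]; last exact: H2.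
by rewrite col_mxEd.
Qed.

Lemma MD_block p1 p2 q1 q2 (F1 : R -> 'M[R]_(p1, q1)) (F2 : R -> 'M[R]_(p1, q2))
  (F3 : R -> 'M[R]_(p2, q1)) (F4 : R -> 'M[R]_(p2, q2)) z M1 M2 M3 M4 :
  MD F1 z M1 -> MD F2 z M2 -> MD F3 z M3 -> MD F4 z M4 ->
  MD (fun t => block_mx (F1 t) (F2 t) (F3 t) (F4 t)) z (block_mx M1 M2 M3 M4).
Proof.
move=> H1 H2 H3 H4; rewrite /block_mx.
by apply: MD_col; apply: MD_row.
Qed.

Lemma ddot n (F G : R -> 'cV[R]_n) z M N : MD F z M -> MD G z N ->
  is_derive z (1:R) (fun t => dotv (F t) (G t)) (dotv M (G z) + dotv (F z) N).
Proof.
move=> H1 H2.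
apply: (@dext _ (fun t => \sum_(k < n) F t k 0 * G t k 0)).
  by move=> t; rewrite /dotv mxE; apply: eq_bigr => k _; rewrite mxE.
apply: dval; first by apply: dsum => k; apply: dmul; [exact: H1|exact: H2].
rewrite /dotv !mxE -big_split /=; apply: eq_bigr => k _; rewrite !mxE.
ring.
Qed.

Lemma dotvC n (x y : 'cV[R]_n) : dotv x y = dotv y x.
Proof. by rewrite /dotv !mxE; apply: eq_bigr => k _; rewrite !mxE mulrC. Qed.

Lemma dotvE n (x y : 'cV[R]_n) : x^T *m y = (dotv x y)%:M.
Proof. by rewrite {1}[x^T *m y]mx11_scalar. Qed.

End Infra.

Section Infra2.
Variable R : realType.
Implicit Types (x z : R) (df dg : R).
Lemma dsqr (f : R -> R) x df : is_derive x (1:R) f df ->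
  is_derive x (1:R) (fun t => f t ^+ 2) (f x * df + f x * df).
Proof. move=> H; apply: (@dext _ _ (fun t => f t * f t)); (try by move=> t; rewrite expr2); try exact: dmul. Qed.
Lemma dmuln (f : R -> R) x df k : is_derive x (1:R) f df ->
  is_derive x (1:R) (fun t => f t *+ k) (df *+ k).
Proof.
move=> H; have H2 := dmul (dcst (k%:R) x) H.
have E : k%:R * df + f x * 0 = df *+ k by rewrite mulr0 addr0 mulr_natl.
rewrite -E; exact: (dext (fun t => esym (mulr_natl (f t) k)) H2).
Qed.
End Infra2.

Ltac md := repeat first [ exact: dcst | exact: did | apply: MD_cst
  | apply: MD_block | apply: MD_add | apply: MD_opp | apply: MD_scale | apply: MD_scalar | apply: MD_tr
  | apply: dadd | apply: dopp | apply: dsqr | apply: dmuln | apply: dmul | apply: ddot | eassumption ].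

Lemma scaleRE (R : realType) (a b : R) : a *: b = a * b.
Proof. by []. Qed.

Lemma block_mx_eqI (R : realType) m1 m2 n1 n2 (a a' : 'M[R]_(m1, n1)) (b b' : 'M[R]_(m1, n2))
  (c c' : 'M[R]_(m2, n1)) (d d' : 'M[R]_(m2, n2)) :
  a = a' -> b = b' -> c = c' -> d = d' -> block_mx a b c d = block_mx a' b' c' d'.
Proof. by move=> -> -> -> ->. Qed.

Lemma trE3 (R : realType) n (A : 'M[R]_n) (a b : R) (X Y Z : 'cV[R]_n) : A^T = - A ->
  (a *: X + b *: Y + A *m Z)^T = a *: X^T + b *: Y^T - Z^T *m A.
Proof. by move=> hA; rewrite !linearD /= !linearZ /= trmx_mul hA mulmxN. Qed.

Lemma trE4 (R : realType) n (A : 'M[R]_n) (a b c : R) (X Y W Z : 'cV[R]_n) : A^T = - A ->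
  (a *: X + b *: Y + c *: W + (A + 2%:M) *m Z)^T
  = a *: X^T + b *: Y^T + c *: W^T - Z^T *m A + 2 *: Z^T.
Proof.
move=> hA; rewrite mulmxDl mul_scalar_mx !linearD /= !linearZ /= trmx_mul hA mulmxN.
by rewrite addrA.
Qed.

Ltac zclean := rewrite ?(scaler0, scale0r, addr0, add0r, mul0mx, mulmx0, oppr0, subr0, sub0r).
Ltac bclean := rewrite ?(mulmx_block, scale_block_mx, add_block_mx, opp_block_mx); zclean.
Ltac ord1s := repeat match goal with i : 'I_1 |- _ => rewrite (fintype.ord1 i); clear i end.
Ltac small := do 2 (rewrite ?(mulmxDl, mulmxDr, mulmxBl, mulmxBr, mulmxN, mulNmx, mul0mx, mulmx0,
    mul1mx, mulmx1, mul_scalar_mx, mul_mx_scalar); rewrite -?scalemxAl -?scalemxAr ?dotvE);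
  apply/matrixP => ? ?; ord1s;
  rewrite ?mxE ?big_ord1 ?mxE ?eqxx ?mulr1n ?mulr0n ?scaleRE.

Section Blk.
Variables (R : realType) (n : nat).
Notation blk := (@blk4 R n).
Lemma blk4_add a11 a12 a13 a14 a21 a22 a23 a24 a31 a32 a33 a34 a41 a42 a43 a44
  b11 b12 b13 b14 b21 b22 b23 b24 b31 b32 b33 b34 b41 b42 b43 b44 :
  blk a11 a12 a13 a14 a21 a22 a23 a24 a31 a32 a33 a34 a41 a42 a43 a44 +
  blk b11 b12 b13 b14 b21 b22 b23 b24 b31 b32 b33 b34 b41 b42 b43 b44 =
  blk (a11 + b11) (a12 + b12) (a13 + b13) (a14 + b14) (a21 + b21) (a22 + b22) (a23 + b23) (a24 + b24)
      (a31 + b31) (a32 + b32) (a33 + b33) (a34 + b34) (a41 + b41) (a42 + b42) (a43 + b43) (a44 + b44).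
Proof. by rewrite /blk4 !add_block_mx. Qed.
Lemma blk4_opp a11 a12 a13 a14 a21 a22 a23 a24 a31 a32 a33 a34 a41 a42 a43 a44 :
  - blk a11 a12 a13 a14 a21 a22 a23 a24 a31 a32 a33 a34 a41 a42 a43 a44 =
  blk (- a11) (- a12) (- a13) (- a14) (- a21) (- a22) (- a23) (- a24)
      (- a31) (- a32) (- a33) (- a34) (- a41) (- a42) (- a43) (- a44).
Proof. by rewrite /blk4 !opp_block_mx. Qed.
Lemma blk4_sub a11 a12 a13 a14 a21 a22 a23 a24 a31 a32 a33 a34 a41 a42 a43 a44
  b11 b12 b13 b14 b21 b22 b23 b24 b31 b32 b33 b34 b41 b42 b43 b44 :
  blk a11 a12 a13 a14 a21 a22 a23 a24 a31 a32 a33 a34 a41 a42 a43 a44 -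
  blk b11 b12 b13 b14 b21 b22 b23 b24 b31 b32 b33 b34 b41 b42 b43 b44 =
  blk (a11 - b11) (a12 - b12) (a13 - b13) (a14 - b14) (a21 - b21) (a22 - b22) (a23 - b23) (a24 - b24)
      (a31 - b31) (a32 - b32) (a33 - b33) (a34 - b34) (a41 - b41) (a42 - b42) (a43 - b43) (a44 - b44).
Proof. by rewrite blk4_opp blk4_add. Qed.
Lemma blk4_scale (c : R) a11 a12 a13 a14 a21 a22 a23 a24 a31 a32 a33 a34 a41 a42 a43 a44 :
  c *: blk a11 a12 a13 a14 a21 a22 a23 a24 a31 a32 a33 a34 a41 a42 a43 a44 =
  blk (c *: a11) (c *: a12) (c *: a13) (c *: a14) (c *: a21) (c *: a22) (c *: a23) (c *: a24)
      (c *: a31) (c *: a32) (c *: a33) (c *: a34) (c *: a41) (c *: a42) (c *: a43) (c *: a44).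
Proof. by rewrite /blk4 !scale_block_mx. Qed.
Lemma blk4_mul a11 a12 a13 a14 a21 a22 a23 a24 a31 a32 a33 a34 a41 a42 a43 a44
  b11 b12 b13 b14 b21 b22 b23 b24 b31 b32 b33 b34 b41 b42 b43 b44 :
  blk a11 a12 a13 a14 a21 a22 a23 a24 a31 a32 a33 a34 a41 a42 a43 a44 *m
  blk b11 b12 b13 b14 b21 b22 b23 b24 b31 b32 b33 b34 b41 b42 b43 b44 =
  blk (a11 *m b11 + a12 *m b21 + (a13 *m b31 + a14 *m b41))
      (a11 *m b12 + a12 *m b22 + (a13 *m b32 + a14 *m b42))
      (a11 *m b13 + a12 *m b23 + (a13 *m b33 + a14 *m b43))
      (a11 *m b14 + a12 *m b24 + (a13 *m b34 + a14 *m b44))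
      (a21 *m b11 + a22 *m b21 + (a23 *m b31 + a24 *m b41))
      (a21 *m b12 + a22 *m b22 + (a23 *m b32 + a24 *m b42))
      (a21 *m b13 + a22 *m b23 + (a23 *m b33 + a24 *m b43))
      (a21 *m b14 + a22 *m b24 + (a23 *m b34 + a24 *m b44))
      (a31 *m b11 + a32 *m b21 + (a33 *m b31 + a34 *m b41))
      (a31 *m b12 + a32 *m b22 + (a33 *m b32 + a34 *m b42))
      (a31 *m b13 + a32 *m b23 + (a33 *m b33 + a34 *m b43))
      (a31 *m b14 + a32 *m b24 + (a33 *m b34 + a34 *m b44))
      (a41 *m b11 + a42 *m b21 + (a43 *m b31 + a44 *m b41))
      (a41 *m b12 + a42 *m b22 + (a43 *m b32 + a44 *m b42))
      (a41 *m b13 + a42 *m b23 + (a43 *m b33 + a44 *m b43))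
      (a41 *m b14 + a42 *m b24 + (a43 *m b34 + a44 *m b44)).
Proof. by rewrite /blk4 !mulmx_block !add_block_mx. Qed.
Lemma blk4_eqI a11 a12 a13 a14 a21 a22 a23 a24 a31 a32 a33 a34 a41 a42 a43 a44
  b11 b12 b13 b14 b21 b22 b23 b24 b31 b32 b33 b34 b41 b42 b43 b44 :
  a11 = b11 -> a12 = b12 -> a13 = b13 -> a14 = b14 -> a21 = b21 -> a22 = b22 -> a23 = b23 -> a24 = b24 ->
  a31 = b31 -> a32 = b32 -> a33 = b33 -> a34 = b34 -> a41 = b41 -> a42 = b42 -> a43 = b43 -> a44 = b44 ->
  blk a11 a12 a13 a14 a21 a22 a23 a24 a31 a32 a33 a34 a41 a42 a43 a44 =
  blk b11 b12 b13 b14 b21 b22 b23 b24 b31 b32 b33 b34 b41 b42 b43 b44.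
Proof. by do 16 move=> ->. Qed.
Lemma MD_blk4 (f11 f12 : R -> 'M[R]_1) (f13 : R -> 'M[R]_(1, n)) (f14 f21 f22 : R -> 'M[R]_1)
  (f23 : R -> 'M[R]_(1, n)) (f24 : R -> 'M[R]_1) (f31 f32 : R -> 'M[R]_(n, 1)) (f33 : R -> 'M[R]_n)
  (f34 : R -> 'M[R]_(n, 1)) (f41 f42 : R -> 'M[R]_1) (f43 : R -> 'M[R]_(1, n)) (f44 : R -> 'M[R]_1) z
  m11 m12 m13 m14 m21 m22 m23 m24 m31 m32 m33 m34 m41 m42 m43 m44 :
  MD f11 z m11 -> MD f12 z m12 -> MD f13 z m13 -> MD f14 z m14 ->
  MD f21 z m21 -> MD f22 z m22 -> MD f23 z m23 -> MD f24 z m24 ->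
  MD f31 z m31 -> MD f32 z m32 -> MD f33 z m33 -> MD f34 z m34 ->
  MD f41 z m41 -> MD f42 z m42 -> MD f43 z m43 -> MD f44 z m44 ->
  MD (fun t => blk (f11 t) (f12 t) (f13 t) (f14 t) (f21 t) (f22 t) (f23 t) (f24 t)
       (f31 t) (f32 t) (f33 t) (f34 t) (f41 t) (f42 t) (f43 t) (f44 t)) z
     (blk m11 m12 m13 m14 m21 m22 m23 m24 m31 m32 m33 m34 m41 m42 m43 m44).
Proof. by move=> *; rewrite /blk4; do 3 apply: MD_block => //. Qed.
End Blk.


Section Wrap.
Variable R : realType.
Implicit Types (x z : R) (df dg : R).
Record DR x (f : R -> R) df : Prop := DRi { DRp : is_derive x (1:R) f df }.
Record MDR p q (F : R -> 'M[R]_(p, q)) z (M : 'M[R]_(p, q)) : Prop := MDRi { MDRp : MD F z M }.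
Lemma W_dcst (c : R) x : DR x (fun _ => c) 0. Proof. exact: DRi (dcst c x). Qed.
Lemma W_did x : DR x (fun t => t) 1. Proof. exact: DRi (did x). Qed.
Lemma W_dadd (f g : R -> R) x df dg : DR x f df -> DR x g dg -> DR x (fun t => f t + g t) (df + dg).
Proof. by case=> ? [?]; constructor; apply: dadd. Qed.
Lemma W_dopp (f : R -> R) x df : DR x f df -> DR x (fun t => - f t) (- df).
Proof. by case=> ?; constructor; apply: dopp. Qed.
Lemma W_dmul (f g : R -> R) x df dg : DR x f df -> DR x g dg ->
  DR x (fun t => f t * g t) (f x * dg + g x * df).
Proof. by case=> ? [?]; constructor; apply: dmul. Qed.
Lemma W_dsqr (f : R -> R) x df : DR x f df -> DR x (fun t => f t ^+ 2) (f x * df + f x * df).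
Proof. by case=> ?; constructor; apply: dsqr. Qed.
Lemma W_dmuln (f : R -> R) x df k : DR x f df -> DR x (fun t => f t *+ k) (df *+ k).
Proof. by case=> ?; constructor; apply: dmuln. Qed.
Lemma W_ddot n (F G : R -> 'cV[R]_n) z M N : MDR F z M -> MDR G z N ->
  DR z (fun t => dotv (F t) (G t)) (dotv M (G z) + dotv (F z) N).
Proof. by case=> ? [?]; constructor; apply: ddot. Qed.
Lemma W_MD_cst p q (C : 'M[R]_(p, q)) z : MDR (fun _ => C) z 0.
Proof. by constructor; apply: MD_cst. Qed.
Lemma W_MD_add p q (F G : R -> 'M[R]_(p, q)) z M N : MDR F z M -> MDR G z N ->
  MDR (fun t => F t + G t) z (M + N).
Proof. by case=> ? [?]; constructor; apply: MD_add. Qed.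
Lemma W_MD_opp p q (F : R -> 'M[R]_(p, q)) z M : MDR F z M -> MDR (fun t => - F t) z (- M).
Proof. by case=> ?; constructor; apply: MD_opp. Qed.
Lemma W_MD_scale p q (f : R -> R) (F : R -> 'M[R]_(p, q)) z df M :
  DR z f df -> MDR F z M -> MDR (fun t => f t *: F t) z (f z *: M + df *: F z).
Proof. by case=> ? [?]; constructor; apply: MD_scale. Qed.
Lemma W_MD_scalar p (f : R -> R) z df : DR z f df -> MDR (fun t => (f t)%:M : 'M[R]_p) z (df%:M).
Proof. by case=> ?; constructor; apply: MD_scalar. Qed.
Lemma W_MD_tr p q (F : R -> 'M[R]_(p, q)) z M : MDR F z M -> MDR (fun t => (F t)^T) z M^T.
Proof. by case=> ?; constructor; apply: MD_tr. Qed.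
Lemma W_MD_blk4 n (f11 f12 : R -> 'M[R]_1) (f13 : R -> 'M[R]_(1, n)) (f14 f21 f22 : R -> 'M[R]_1)
  (f23 : R -> 'M[R]_(1, n)) (f24 : R -> 'M[R]_1) (f31 f32 : R -> 'M[R]_(n, 1)) (f33 : R -> 'M[R]_n)
  (f34 : R -> 'M[R]_(n, 1)) (f41 f42 : R -> 'M[R]_1) (f43 : R -> 'M[R]_(1, n)) (f44 : R -> 'M[R]_1) z
  m11 m12 m13 m14 m21 m22 m23 m24 m31 m32 m33 m34 m41 m42 m43 m44 :
  MDR f11 z m11 -> MDR f12 z m12 -> MDR f13 z m13 -> MDR f14 z m14 ->
  MDR f21 z m21 -> MDR f22 z m22 -> MDR f23 z m23 -> MDR f24 z m24 ->
  MDR f31 z m31 -> MDR f32 z m32 -> MDR f33 z m33 -> MDR f34 z m34 ->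
  MDR f41 z m41 -> MDR f42 z m42 -> MDR f43 z m43 -> MDR f44 z m44 ->
  MDR (fun t => blk4 (f11 t) (f12 t) (f13 t) (f14 t) (f21 t) (f22 t) (f23 t) (f24 t)
       (f31 t) (f32 t) (f33 t) (f34 t) (f41 t) (f42 t) (f43 t) (f44 t)) z
     (blk4 m11 m12 m13 m14 m21 m22 m23 m24 m31 m32 m33 m34 m41 m42 m43 m44).
Proof.
do 16 case=> ?; constructor; apply: MD_blk4; assumption.
Qed.
End Wrap.

Ltac md1 := lazymatch goal with
  | |- MDR (fun t => blk4 _ _ _ _ _ _ _ _ _ _ _ _ _ _ _ _) _ _ => apply: W_MD_blk4
  | |- MDR (fun _ => ?C) _ _ => apply: W_MD_cst
  | |- DR _ (fun _ => ?C) _ => apply: W_dcst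
  | |- MDR (fun t => _ + _) _ _ => apply: W_MD_add
  | |- MDR (fun t => - _) _ _ => apply: W_MD_opp
  | |- MDR (fun t => _ *: _) _ _ => apply: W_MD_scale
  | |- MDR (fun t => (_)%:M) _ _ => apply: W_MD_scalar
  | |- MDR (fun t => (_)^T) _ _ => apply: W_MD_tr
  | |- MDR _ _ _ => eassumption
  | |- DR _ (fun t => t) _ => apply: W_did
  | |- DR _ (fun t => _ + _) _ => apply: W_dadd
  | |- DR _ (fun t => - _) _ => apply: W_dopp
  | |- DR _ (fun t => _ ^+ 2) _ => apply: W_dsqr
  | |- DR _ (fun t => _ *+ _) _ => apply: W_dmuln
  | |- DR _ (fun t => _ * _) _ => apply: W_dmul
  | |- DR _ (fun t => dotv _ _) _ => apply: W_ddot
  | |- DR _ _ _ => eassumption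
  end.
Ltac md2 := repeat md1.



Lemma partA (R : realType) (n : nat) (A : 'M[R]_n) :
  (0 < n)%N -> A^T = - A ->
  (forall (beta : R) (u : R -> R) (v : R -> 'cV[R]_n),
     (forall z, derivable u z 1) -> (forall z, derivable (derive1 u) z 1) ->
     mxderivable v -> mxderivable (mxder v) -> mxderivable (mxder (mxder v)) ->
     (forall z, (derive1 (derive1 u)) z = 3 / 2 * u z ^+ 2 - 3 / 2 * dotv (v z) (v z) + beta) ->
     (forall z, mxder (mxder (mxder v)) z =
        (3 * u z) *: mxder v z + (3 * (derive1 u) z) *: v z + A *m v z) ->
     let calA := fun (z zeta : R) =>
       zeta ^+ 3 *: LB0 R n + zeta ^+ 2 *: LB1 (u z) (v z)
       + zeta *: LB2 (u z) ((derive1 u) z) (v z) (mxder v z)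
       + LB3ab A beta (u z) ((derive1 u) z) (v z) (mxder v z) (mxder (mxder v) z) in
     forall z zeta : R,
       mxder (fun t => calA t zeta) z
       = mxcomm (LB zeta (u z) (v z)) (calA z zeta)).
Proof.
move=> n0 hA beta u v du du1 dv dv1 dv2 hu2 hv3 calA z zeta.
have Du : DR z u (derive1 u z) by constructor; rewrite derive1E; exact: derivableP.
have Du1 : DR z (derive1 u) (derive1 (derive1 u) z) by constructor; rewrite derive1E; exact: derivableP.
have Dv := MDRi (MD_of z dv). have Dv1 := MDRi (MD_of z dv1). have Dv2 := MDRi (MD_of z dv2).
erewrite MD_mxder; last first.
  apply: MDRp.
  rewrite /calA /LB0 /LB1 /LB2 /LB3ab /LB3gen.
  md2.
rewrite /=.
rewrite hv3 hu2 (trE3 _ _ _ _ _ hA) /mxcomm /calA /LB /LB0 /LB1 /LB2 /LB3ab /LB3gen.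
set U := u z; set U1 := derive1 u z; set V := v z; set V1 := mxder v z; set V2 := mxder (mxder v) z.
clearbody U U1 V V1 V2.
rewrite ?add0r !blk4_scale !blk4_add.
rewrite !blk4_mul blk4_sub.
apply: blk4_eqI.
all: zclean.
all: do 2 rewrite ?(mulmxDl, mulmxDr, mulmxN, mulNmx, mulmxBl, mulmxBr) -?scalemxAl -?scalemxAr; rewrite ?dotvE ?(dotvC V1 V) ?(dotvC V2 V) ?(dotvC V2 V1).
all: apply/matrixP => ? ?; ord1s.
all: rewrite ?mxE ?big_ord1 ?mxE ?eqxx ?mulr1n ?mulr0n ?scaleRE.
all: by field.
Qed.

Lemma partB (R : realType) (n : nat) (A : 'M[R]_n) :
  (0 < n)%N -> A^T = - A ->
  (forall (u : R -> R) (v : R -> 'cV[R]_n),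
     (forall z, derivable u z 1) -> (forall z, derivable (derive1 u) z 1) ->
     mxderivable v -> mxderivable (mxder v) -> mxderivable (mxder (mxder v)) ->
     (forall z, (derive1 (derive1 u)) z = 3 / 2 * u z ^+ 2 - 3 / 2 * dotv (v z) (v z) + z) ->
     (forall z, mxder (mxder (mxder v)) z =
        (3 * u z) *: mxder v z + (3 * (derive1 u) z) *: v z + A *m v z) ->
     let calA := fun (z zeta : R) =>
       zeta ^+ 4 *: LB0 R n + zeta ^+ 3 *: LB1 (u z) (v z)
       + zeta ^+ 2 *: LB2 (u z) ((derive1 u) z) (v z) (mxder v z)
       + zeta *: LB3ab A z (u z) ((derive1 u) z) (v z) (mxder v z) (mxder (mxder v) z)
       + LB4 R n in
     forall z zeta : R,
       mxder (fun t => calA t zeta) z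
       = mxder (fun s => LB s (u z) (v z)) zeta
         + mxcomm (LB zeta (u z) (v z)) (calA z zeta)).
Proof.
move=> n0 hA u v du du1 dv dv1 dv2 hu2 hv3 calA z zeta.
have Du : DR z u (derive1 u z) by constructor; rewrite derive1E; exact: derivableP.
have Du1 : DR z (derive1 u) (derive1 (derive1 u) z) by constructor; rewrite derive1E; exact: derivableP.
have Dv := MDRi (MD_of z dv). have Dv1 := MDRi (MD_of z dv1). have Dv2 := MDRi (MD_of z dv2).
erewrite MD_mxder; last first.
  apply: MDRp.
  rewrite /calA /LB0 /LB1 /LB2 /LB3ab /LB3gen /LB4.
  md2.
erewrite (MD_mxder (F := fun s => LB s (u z) (v z))); last first.
  apply: MDRp.
  rewrite /LB /LB0 /LB1.
  md2.
rewrite /=.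
rewrite hv3 hu2 (trE3 _ _ _ _ _ hA) /mxcomm /calA /LB /LB0 /LB1 /LB2 /LB3ab /LB3gen /LB4.
set U := u z; set U1 := derive1 u z; set V := v z; set V1 := mxder v z; set V2 := mxder (mxder v) z.
clearbody U U1 V V1 V2.
rewrite ?add0r !blk4_scale !blk4_add.
rewrite !blk4_mul blk4_sub blk4_add.
apply: blk4_eqI.
all: zclean.
all: do 2 rewrite ?(mulmxDl, mulmxDr, mulmxN, mulNmx, mulmxBl, mulmxBr) -?scalemxAl -?scalemxAr; rewrite ?dotvE ?(dotvC V1 V) ?(dotvC V2 V) ?(dotvC V2 V1).
all: apply/matrixP => ? ?; ord1s.
all: rewrite ?mxE ?big_ord1 ?mxE ?eqxx ?mulr1n ?mulr0n ?scaleRE.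
all: by field.
Qed.

Lemma partC (R : realType) (n : nat) (A : 'M[R]_n) :
  (0 < n)%N -> A^T = - A ->
  (forall (u : R -> R) (v : R -> 'cV[R]_n),
     (forall z, derivable u z 1) -> (forall z, derivable (derive1 u) z 1) ->
     (forall z, derivable (derive1 (derive1 u)) z 1) ->
     mxderivable v -> mxderivable (mxder v) -> mxderivable (mxder (mxder v)) ->
     (forall z, (derive1 (derive1 (derive1 u))) z =
        3 * u z * (derive1 u) z - 3 * dotv (v z) (mxder v z) + z * (derive1 u) z + 2 * u z) ->
     (forall z, mxder (mxder (mxder v)) z =
        (3 * u z) *: mxder v z + (3 * (derive1 u) z) *: v z + z *: mxder v z
        + (A + 2%:M) *m v z) ->
     let calA := fun (z zeta : R) =>
       - ((zeta - z / zeta) *: LB zeta (u z) (v z))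
       - LB2 (u z) ((derive1 u) z) (v z) (mxder v z)
       - zeta^-1 *: LB3c A (u z) ((derive1 u) z) ((derive1 (derive1 u)) z) (v z) (mxder v z)
                     (mxder (mxder v) z) in
     forall z zeta : R, zeta != 0 ->
       mxder (fun t => calA t zeta) z
       = mxder (fun s => LB s (u z) (v z)) zeta
         + mxcomm (LB zeta (u z) (v z)) (calA z zeta)).
Proof.
move=> n0 hA u v du du1 du2 dv dv1 dv2 hu3 hv3 calA z zeta hz.
have Du : DR z u (derive1 u z) by constructor; rewrite derive1E; exact: derivableP.
have Du1 : DR z (derive1 u) (derive1 (derive1 u) z) by constructor; rewrite derive1E; exact: derivableP.
have Du2 : DR z (derive1 (derive1 u)) (derive1 (derive1 (derive1 u)) z).
  by constructor; rewrite derive1E; exact: derivableP.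
have Dv := MDRi (MD_of z dv). have Dv1 := MDRi (MD_of z dv1). have Dv2 := MDRi (MD_of z dv2).
erewrite MD_mxder; last first.
  apply: MDRp.
  rewrite /calA /LB /LB0 /LB1 /LB2 /LB3c /LB3gen.
  md2.
erewrite (MD_mxder (F := fun s => LB s (u z) (v z))); last first.
  apply: MDRp.
  rewrite /LB /LB0 /LB1.
  md2.
rewrite /=.
rewrite hv3 hu3 (trE4 _ _ _ _ _ _ _ hA) (mulmxDl A 2%:M (v z)) mul_scalar_mx.
rewrite /mxcomm /calA /LB /LB0 /LB1 /LB2 /LB3c /LB3gen.
set U := u z; set U1 := derive1 u z; set U2 := derive1 (derive1 u) z.
set V := v z; set V1 := mxder v z; set V2 := mxder (mxder v) z.
clearbody U U1 U2 V V1 V2.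
rewrite ?add0r ?(blk4_opp, blk4_scale, blk4_add, blk4_sub).
rewrite !blk4_mul ?(blk4_opp, blk4_scale, blk4_add, blk4_sub).
apply: blk4_eqI.
all: zclean.
all: do 2 rewrite ?(mulmxDl, mulmxDr, mulmxN, mulNmx, mulmxBl, mulmxBr) -?scalemxAl -?scalemxAr; rewrite ?dotvE ?(dotvC V1 V) ?(dotvC V2 V) ?(dotvC V2 V1).
all: apply/matrixP => ? ?; ord1s.
all: rewrite ?mxE ?big_ord1 ?mxE ?eqxx ?mulr1n ?mulr0n ?scaleRE.
all: by field.
Qed.

Unset Implicit Arguments. Set Strict Implicit.

Theorem proposition5 (R : realType) (n : nat) (A : 'M[R]_n) :
  (0 < n)%N -> A^T = - A ->
  (* (a) isospectral Lax pair *)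
  (forall (beta : R) (u : R -> R) (v : R -> 'cV[R]_n),
     (forall z, derivable u z 1) -> (forall z, derivable (derive1 u) z 1) ->
     mxderivable v -> mxderivable (mxder v) -> mxderivable (mxder (mxder v)) ->
     (forall z, (derive1 (derive1 u)) z = 3 / 2 * u z ^+ 2 - 3 / 2 * dotv (v z) (v z) + beta) ->
     (forall z, mxder (mxder (mxder v)) z =
        (3 * u z) *: mxder v z + (3 * (derive1 u) z) *: v z + A *m v z) ->
     let calA := fun (z zeta : R) =>
       zeta ^+ 3 *: LB0 R n + zeta ^+ 2 *: LB1 (u z) (v z)
       + zeta *: LB2 (u z) ((derive1 u) z) (v z) (mxder v z)
       + LB3ab A beta (u z) ((derive1 u) z) (v z) (mxder v z) (mxder (mxder v) z) in
     forall z zeta : R,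
       mxder (fun t => calA t zeta) z
       = mxcomm (LB zeta (u z) (v z)) (calA z zeta))
  /\
  (* (b) isomonodromic Lax pair *)
  (forall (u : R -> R) (v : R -> 'cV[R]_n),
     (forall z, derivable u z 1) -> (forall z, derivable (derive1 u) z 1) ->
     mxderivable v -> mxderivable (mxder v) -> mxderivable (mxder (mxder v)) ->
     (forall z, (derive1 (derive1 u)) z = 3 / 2 * u z ^+ 2 - 3 / 2 * dotv (v z) (v z) + z) ->
     (forall z, mxder (mxder (mxder v)) z =
        (3 * u z) *: mxder v z + (3 * (derive1 u) z) *: v z + A *m v z) ->
     let calA := fun (z zeta : R) =>
       zeta ^+ 4 *: LB0 R n + zeta ^+ 3 *: LB1 (u z) (v z)
       + zeta ^+ 2 *: LB2 (u z) ((derive1 u) z) (v z) (mxder v z)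
       + zeta *: LB3ab A z (u z) ((derive1 u) z) (v z) (mxder v z) (mxder (mxder v) z)
       + LB4 R n in
     forall z zeta : R,
       mxder (fun t => calA t zeta) z
       = mxder (fun s => LB s (u z) (v z)) zeta
         + mxcomm (LB zeta (u z) (v z)) (calA z zeta))
  /\
  (* (c) isomonodromic Lax pair *)
  (forall (u : R -> R) (v : R -> 'cV[R]_n),
     (forall z, derivable u z 1) -> (forall z, derivable (derive1 u) z 1) ->
     (forall z, derivable (derive1 (derive1 u)) z 1) ->
     mxderivable v -> mxderivable (mxder v) -> mxderivable (mxder (mxder v)) ->
     (forall z, (derive1 (derive1 (derive1 u))) z =
        3 * u z * (derive1 u) z - 3 * dotv (v z) (mxder v z) + z * (derive1 u) z + 2 * u z) ->
     (forall z, mxder (mxder (mxder v)) z =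
        (3 * u z) *: mxder v z + (3 * (derive1 u) z) *: v z + z *: mxder v z
        + (A + 2%:M) *m v z) ->
     let calA := fun (z zeta : R) =>
       - ((zeta - z / zeta) *: LB zeta (u z) (v z))
       - LB2 (u z) ((derive1 u) z) (v z) (mxder v z)
       - zeta^-1 *: LB3c A (u z) ((derive1 u) z) ((derive1 (derive1 u)) z) (v z) (mxder v z)
                     (mxder (mxder v) z) in
     forall z zeta : R, zeta != 0 ->
       mxder (fun t => calA t zeta) z
       = mxder (fun s => LB s (u z) (v z)) zeta
         + mxcomm (LB zeta (u z) (v z)) (calA z zeta)).
Proof.
move=> n0 hA; split; first exact: (partA n0 hA).
split; first exact: (partB n0 hA).
exact: (partC n0 hA).
Qed.
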